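(* For all $n\in\mathbb N$, \[ \max\Big\{|\alpha(n,0)|,\ |\alpha(n,1)|,\ \sum_{s=2}^\infty|\alpha(n,s)|\Big\}\le\frac1N\Big(1+\frac6N\Big)^{n-1}. \]
   Context: $E$ is a finite set with $N=\#E>8$ elements; $Q$ is an irreducible stochastic matrix on $E$ with $Q(x,y)=Q(y,x)$ for all $x,y$ and $\mathrm{tr}(Q)=0$. The function $\alpha:\mathbb Z_+\times\mathbb Z_+\to\mathbb R$ is defined by $\alpha(0,s)=0$ for all $s$ and, for $n\in\mathbb Z_+$, $\alpha(n+1,0)=\frac2{N^2}+\alpha(n,0)+\frac2{N^2}\sum_{s\ge1}\alpha(n,s)\mathrm{tr}(Q^s)$, $\alpha(n+1,1)=-\frac2{N^2}+\frac{N-2}N\alpha(n,1)-\frac2{N^2}\sum_{s\ge1}\alpha(n,s)\mathrm{tr}(Q^s)$, $\alpha(n+1,s)=\frac{N-2}N\alpha(n,s)+\frac2N\alpha(n,s-1)$ for $s\ge2$. *)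

(* Defs.v *)
From HB Require Import structures.
From mathcomp Require Import all_boot all_order all_algebra.
Set Implicit Arguments. Unset Strict Implicit. Unset Printing Implicit Defensive.
Import Order.TTheory GRing.Theory Num.Theory.
Local Open Scope ring_scope.

(* matrix power Q^k, valid for any dimension N (including non-successor N) *)
Definition mxpow (R : pzRingType) (N : nat) (Q : 'M[R]_N) (k : nat) : 'M[R]_N :=
  iter k (mulmx Q) 1%:M.

Definition stochastic (R : numDomainType) (N : nat) (Q : 'M[R]_N) : Prop :=
  (forall x y, 0 <= Q x y) /\ (forall x, \sum_y Q x y = 1).

Definition irreducible_mx (R : numDomainType) (N : nat) (Q : 'M[R]_N) : Prop :=
  forall x y, exists k : nat, 0 < mxpow Q k x y.

(* alpha n s.  The infinite sums over s >= 1 in the recursion are finitely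
   supported: alpha n s = 0 for s > n (immediate induction), so the sum at
   step n is taken over 1 <= s <= n, which is exact. *)
Fixpoint alpha (R : numFieldType) (N : nat) (Q : 'M[R]_N) (n : nat) : nat -> R :=
  match n with
  | 0 => fun _ => 0
  | n'.+1 =>
      let a := alpha Q n' in
      let S := \sum_(1 <= s < n'.+1) a s * \tr (mxpow Q s) in
      fun s => match s with
               | 0 => 2 / (N%:R ^+ 2) + a 0%N + 2 / (N%:R ^+ 2) * S
               | 1 => - (2 / (N%:R ^+ 2)) + (N%:R - 2) / N%:R * a 1%N
                      - 2 / (N%:R ^+ 2) * S
               | s'.+2 => (N%:R - 2) / N%:R * a s'.+2 + 2 / N%:R * a s'.+1
               end
  end.

(* Main.v *)
Require Import Defs.
From HB Require Import structures.
From mathcomp Require Import all_boot all_order all_algebra.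
Import Order.TTheory GRing.Theory Num.Theory.
Local Open Scope ring_scope.

Lemma mxpow_stoch (R : realFieldType) (N : nat) (Q : 'M[R]_N) :
  stochastic Q -> forall s,
  (forall x y, 0 <= mxpow Q s x y) /\ (forall x, \sum_y mxpow Q s x y = 1).
Proof.
move=> [Q0 Q1]; elim=> [|s [P0 P1]].
  rewrite /mxpow /=; split=> [x y|x]; first by rewrite mxE ler0n.
  rewrite (bigD1 x) //= big1 ?addr0 ?mxE ?eqxx //.
  by move=> y /negbTE; rewrite mxE eq_sym => ->.
have E : mxpow Q s.+1 = Q *m mxpow Q s by [].
rewrite E; split=> [x y|x].
  by rewrite mxE; apply: sumr_ge0 => k _; apply: mulr_ge0.
under eq_bigr do rewrite mxE.
rewrite exchange_big /=.
under eq_bigr do rewrite -mulr_sumr P1 mulr1.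
exact: Q1.
Qed.

Lemma tr_bound (R : realFieldType) (N : nat) (Q : 'M[R]_N) :
  stochastic Q -> forall s, `|\tr (mxpow Q s)| <= N%:R.
Proof.
move=> hs s; have [P0 P1] := mxpow_stoch _ _ _ hs s.
rewrite ger0_norm; last by apply: sumr_ge0.
rewrite /mxtrace; apply: (@le_trans _ _ (\sum_(i < N) (1 : R))).
  apply: ler_sum => i _; rewrite -(P1 i) (bigD1 i) //= lerDl.
  by apply: sumr_ge0.
by rewrite sumr_const card_ord.
Qed.

From mathcomp Require Import ring lra.

Lemma S_bound (R : realFieldType) (N : nat) (Q : 'M[R]_N) (a : nat -> R) (m : R) :
  stochastic Q -> \tr Q = 0 -> 0 <= m ->
  (forall M, \sum_(2 <= s < M) `|a s| <= m) ->
  forall K, `|\sum_(1 <= s < K) a s * \tr (mxpow Q s)| <= N%:R * m.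
Proof.
move=> hs htr m0 hM K.
have c0 : 0 <= N%:R :> R by rewrite ler0n.
apply: le_trans (ler_norm_sum _ _ _) _.
case: (ltnP 1 K) => hK; last by rewrite big_geq // mulr_ge0.
rewrite big_ltn // /mxpow /= mulmx1 htr mulr0 normr0 add0r.
apply: (@le_trans _ _ (\sum_(2 <= s < K) `|a s| * N%:R)).
  by apply: ler_sum => s _; rewrite normrM ler_wpM2l // tr_bound.
by rewrite -mulr_suml mulrC ler_wpM2l.
Qed.

Lemma step (R : realFieldType) (N : nat) (Q : 'M[R]_N) (n : nat) (m : R) :
  (2 < N)%N -> stochastic Q -> \tr Q = 0 -> 0 <= m ->
  `|alpha Q n 0| <= m -> `|alpha Q n 1| <= m ->
  (forall M, \sum_(2 <= s < M) `|alpha Q n s| <= m) ->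
  [/\ `|alpha Q n.+1 0| <= 2 / N%:R^+2 + (1 + 2/N%:R) * m,
      `|alpha Q n.+1 1| <= 2 / N%:R^+2 + (1 + 2/N%:R) * m &
      forall M, \sum_(2 <= s < M) `|alpha Q n.+1 s| <= 2 / N%:R^+2 + (1 + 2/N%:R) * m].
Proof.
move=> hN hs htr m0 h0 h1 hM.
have HS := S_bound _ _ _ (alpha Q n) m hs htr m0 hM n.+1.
set c : R := N%:R in HS *.
have c2 : 2 < c by rewrite /c ltr_nat.
have cn0 : c != 0 by rewrite gt_eqF //; lra.
set k : R := 2 / c ^+ 2.
set t : R := 2 / c.
have k0 : 0 <= k by rewrite /k divr_ge0 // exprn_ge0 //; lra.
have t0 : 0 <= t by rewrite /t divr_ge0 //; lra.
have kc : k * c = t by rewrite /k /t; field.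
have u0 : 0 <= (c - 2) / c by rewrite divr_ge0 //; lra.
have ut : (c - 2) / c = 1 - t by rewrite /t; field.
set S := \sum_(1 <= s < n.+1) _ in HS.
have kS : k * `|S| <= t * m by rewrite -kc -mulrA ler_wpM2l.
split.
- rewrite /=. rewrite -/c -/k -/S.
  apply: le_trans (ler_normD _ _) _.
  apply: le_trans (lerD (ler_normD _ _) (lexx _)) _.
  rewrite (ger0_norm k0) [`|k * _|]normrM (ger0_norm k0); lra.
- rewrite /=. rewrite -/c -/k -/S.
  apply: le_trans (ler_normD _ _) _.
  apply: le_trans (lerD (ler_normD _ _) (lexx _)) _.
  rewrite !normrN (ger0_norm k0) [`|k * _|]normrM [`|_ / c * _|]normrM (ger0_norm k0) (ger0_norm u0) ut.
  have tm : 0 <= t * m by rewrite mulr_ge0.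
  have : (1 - t) * `|alpha Q n 1| <= (1 - t) * m by rewrite ler_wpM2l // -ut.
  lra.
move=> M.
apply: (@le_trans _ _ (\sum_(2 <= s < M) ((1 - t) * `|alpha Q n s| + t * `|alpha Q n s.-1|))).
  rewrite !big_nat; apply: ler_sum => s /andP[hs2 _].
  case: s hs2 => [|[|s]] // _ /=.
  rewrite -/c -/t ut.
  apply: le_trans (ler_normD _ _) _.
  by rewrite [`|(1 - t) * _|]normrM [`|t * _|]normrM (ger0_norm t0) -ut (ger0_norm u0).
rewrite big_split /= -!mulr_sumr [X in t * X]big_add1 /=.
have H2 : \sum_(1 <= i < M.-1) `|alpha Q n i| <= m + m.
  case: (ltnP 1 M.-1) => hK; last by rewrite big_geq //; lra.
  by rewrite big_ltn // lerD.
have A1 : (1 - t) * \sum_(2 <= i < M) `|alpha Q n i| <= (1 - t) * m.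
  by rewrite ler_wpM2l // -ut.
have A2 : t * \sum_(1 <= i < M.-1) `|alpha Q n i| <= t * (m + m) by rewrite ler_wpM2l.
have tm : 0 <= t * m by rewrite mulr_ge0.
lra.
Qed.

Lemma arith (R : realFieldType) (c x : R) : 0 < c -> 1 <= x ->
  2 / c ^+ 2 + (1 + 2 / c) * (c^-1 * x) <= c^-1 * ((1 + 6 / c) * x).
Proof.
move=> c0 x1; rewrite -subr_ge0.
have -> : c^-1 * ((1 + 6 / c) * x) - (2 / c ^+ 2 + (1 + 2 / c) * (c^-1 * x))
  = c^-1 ^+ 2 * (4 * x - 2) by field; rewrite gt_eqF.
by apply: mulr_ge0; [rewrite exprn_ge0 // invr_ge0 ltW | lra].
Qed.

Theorem lemma3p4 (R : realFieldType) (N : nat) (Q : 'M[R]_N)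
  (hN : (8 < N)%N)
  (hstoch : stochastic Q) (hirr : irreducible_mx Q)
  (hsym : forall x y, Q x y = Q y x)
  (htr : \tr Q = 0) :
  forall (n M : nat),
    Num.max `|alpha Q n 0%N|
      (Num.max `|alpha Q n 1%N| (\sum_(2 <= s < M) `|alpha Q n s|))
    <= N%:R^-1 * (1 + 6 / N%:R) ^ (n%:Z - 1).
Proof.
have c8 : 8 < N%:R :> R by rewrite ltr_nat.
have c0 : 0 < N%:R :> R by lra.
have r1 : 1 <= 1 + 6 / N%:R :> R by rewrite lerDl divr_ge0 //; lra.
have hN2 : (2 < N)%N by apply: ltn_trans hN.
have key : forall n, [/\ `|alpha Q n.+1 0| <= N%:R^-1 * (1 + 6 / N%:R) ^+ n,
    `|alpha Q n.+1 1| <= N%:R^-1 * (1 + 6 / N%:R) ^+ n &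
    forall M, \sum_(2 <= s < M) `|alpha Q n.+1 s| <= N%:R^-1 * (1 + 6 / N%:R) ^+ n].
  elim=> [|n [i0 i1 i2]].
    have z0 : `|alpha Q 0 0| <= 0 by rewrite /= normr0.
    have z1 : `|alpha Q 0 1| <= 0 by rewrite /= normr0.
    have z2 : forall M, \sum_(2 <= s < M) `|alpha Q 0 s| <= 0.
      by move=> M; rewrite big1 // => s _; rewrite /= normr0.
    have [j0 j1 j2] := step _ _ Q 0 0 hN2 hstoch htr (lexx _) z0 z1 z2.
    have e : 2 / N%:R ^+ 2 + (1 + 2 / N%:R) * 0 <= N%:R^-1 * (1 + 6 / N%:R) ^+ 0 :> R.
      rewrite expr0 mulr0 addr0 mulr1 -subr_ge0.
      have -> : N%:R^-1 - 2 / N%:R ^+ 2 = N%:R^-1 ^+ 2 * (N%:R - 2) :> R.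
        by field; rewrite gt_eqF.
      by apply: mulr_ge0; [rewrite exprn_ge0 // invr_ge0 ltW | lra].
    split; [exact: le_trans j0 e | exact: le_trans j1 e | by move=> M; apply: le_trans (j2 M) e].
  have B0 : 0 <= N%:R^-1 * (1 + 6 / N%:R) ^+ n :> R.
    by apply: mulr_ge0; [rewrite invr_ge0 ltW | apply: exprn_ge0; lra].
  have [j0 j1 j2] := step _ _ Q n.+1 _ hN2 hstoch htr B0 i0 i1 i2.
  have e := arith _ _ _ c0 (exprn_ege1 n r1).
  rewrite -exprS in e.
  split; [exact: le_trans j0 e | exact: le_trans j1 e | by move=> M; apply: le_trans (j2 M) e].
case=> [|n] M.
  have z : forall s, `|alpha Q 0 s| = 0 by move=> s; exact: normr0.
  rewrite !z big1 ?maxxx //.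
  apply: mulr_ge0; first by rewrite invr_ge0 ltW.
  by apply: exprz_ge0; lra.
have -> : (n.+1%:Z - 1) = n%:Z by rewrite intS addrC addKr.
rewrite -exprnP.
have [j0 j1 j2] := key n.
by rewrite !ge_max j0 j1 j2.
Qed.
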